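(* Let $T>0$, $M$ and $N$ be positive integers, $\tau=T/M$, $t_k=k\tau$ ($k=0,\dots,M$), $h=1/N$ and $x_r=rh$ ($r=0,\dots,N$). Let $u:\Omega=[0,1]\times[0,T]\to\mathbb{R}$ be such that $\partial_x^3 u$ is continuous on $\Omega$, and write $u_{k}(x)=u(x,t_{k})$. Let $0<\gamma<1$ and $0\le k\le M-1$. For an integer $m\ge 1$ and $\eta>0$ put $c^{\eta}_m=\frac{(m-1)^{\eta}-m^{\eta}}{\eta}$, and set $\nu_h^{\gamma}=\frac{h^{1-\gamma}}{\Gamma(1-\gamma)}$. For $1\le r\le N-1$ define the weights $w^{\gamma}_{j,r}$, $j=0,\dots,r$, by \[ w^{\gamma}_{j,r}=\tilde w^{\gamma}_{j-1,0}-\tilde w^{\gamma}_{j,1}, \] where $\tilde w^{\gamma}_{-1,0}=0$, $\tilde w^{\gamma}_{r,1}=0$, and for $\rho\in\{0,1\}$ and $m=1,\dots,r$, \[ \tilde w^{\gamma}_{r-m,\rho}=c^{2-\gamma}_{m}-(m-\rho)\,c^{1-\gamma}_{m}. \] Then for $r=1,\dots,N-1$, \[ D_x^{\gamma}u_{k+1}(x_r)=\nu_h^{\gamma}\sum_{j=0}^{r}w^{\gamma}_{j,r}\,u_{k+1}'(x_j)+R_h^{\gamma}(r), \] where the remainder satisfies \[ \|R_h^{\gamma}\|_{\infty}\le\frac{h^{2}\bar{\mathcal{M}}_u}{8\,\Gamma(2-\gamma)},\qquad \bar{\mathcal{M}}_u=\sup_{(x,t)\in\Omega}\Big|\frac{\partial^3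 u}{\partial x^3}(x,t)\Big|. \]
   Context: For $0<\gamma<1$, the Caputo derivative in $x$ is $D_x^{\gamma}f(x)=\frac{1}{\Gamma(1-\gamma)}\int_0^{x}(x-s)^{-\gamma}f'(s)\,ds$ for $x>0$. Here $u_{k+1}'$ denotes the first derivative of $x\mapsto u(x,t_{k+1})$, and $\|R_h^\gamma\|_\infty$ denotes the maximum of $|R_h^\gamma(r)|$ over $r=1,\dots,N-1$. *)

(* Defs.v *)
From Stdlib Require Import Reals Lra Lia.
From Coquelicot Require Import Coquelicot.
Open Scope R_scope.

(* x^y with the convention 0^y = 0 (and = 0 for x <= 0); Stdlib's Rpower 0 y = 1. *)
Definition pw (x y : R) : R := if Rlt_dec 0 x then Rpower x y else 0.

Definition Gamma (z : R) : R :=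
  RInt_gen (fun t => pw t (z - 1) * exp (- t)) (at_right 0) (Rbar_locally p_infty).

Definition is_deriv_on (a b : R) (f f' : R -> R) : Prop :=
  forall x, a <= x <= b ->
    filterlim (fun y => (f y - f x) / (y - x))
      (within (fun y => a <= y <= b /\ y <> x) (locally x)) (locally (f' x)).

Definition continuous_on_Omega (T : R) (g : R -> R -> R) : Prop :=
  forall x t, 0 <= x <= 1 -> 0 <= t <= T ->
  forall eps : posreal, exists delta : posreal, forall y s,
    0 <= y <= 1 -> 0 <= s <= T -> Rabs (y - x) < delta -> Rabs (s - t) < delta ->
    Rabs (g y s - g x t) < eps.

(* Caputo derivative of order gamma at x > 0 of a function whose derivative is df:
   (1/Gamma(1-gamma)) * int_0^x (x-s)^(-gamma) df(s) ds  (improper at s = x). *)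
Definition caputo (gamma : R) (df : R -> R) (x : R) : R :=
  / Gamma (1 - gamma) *
  RInt_gen (fun s => pw (x - s) (- gamma) * df s) (at_point 0) (at_left x).

Definition cc (eta : R) (m : nat) : R := (pw (INR m - 1) eta - pw (INR m) eta) / eta.

(* wtilde^gamma_{i,rho} for 0 <= i <= r-1, i.e. m = r - i *)
Definition wtil (gamma : R) (r : nat) (rho : R) (i : nat) : R :=
  cc (2 - gamma) (r - i) - (INR (r - i) - rho) * cc (1 - gamma) (r - i).

Definition wgt (gamma : R) (j r : nat) : R :=
  (if Nat.eqb j 0 then 0 else wtil gamma r 0 (j - 1))
  - (if Nat.eqb j r then 0 else wtil gamma r 1 j).

Definition Mbar (T : R) (u3 : R -> R -> R) : R :=
  real (Lub_Rbar (fun z => exists x t, 0 <= x <= 1 /\ 0 <= t <= T /\ z = Rabs (u3 x t))).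

(* Main.v *)
Require Import Defs.
From Stdlib Require Import Reals Lra Lia ZArith ClassicalEpsilon Classical.
From Coquelicot Require Import Coquelicot.
Open Scope R_scope.

Lemma bounded_Omega T g : 0 <= T -> continuous_on_Omega T g ->
  exists K, forall x t, 0 <= x <= 1 -> 0 <= t <= T -> Rabs (g x t) <= K.
Proof.
intros HT Hc.
assert (Hex : forall p : R * R, {d : posreal | (0 <= fst p <= 1 /\ 0 <= snd p <= T) ->
  forall y s, 0 <= y <= 1 -> 0 <= s <= T -> Rabs (y - fst p) < d -> Rabs (s - snd p) < d ->
    Rabs (g y s - g (fst p) (snd p)) < 1}).
{ intro p. apply constructive_indefinite_description.
  destruct (classic (0 <= fst p <= 1 /\ 0 <= snd p <= T)) as [Hin|Hout].
  - destruct (Hc (fst p) (snd p) (proj1 Hin) (proj2 Hin) (mkposreal 1 Rlt_0_1)) as [d Hd].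
    exists d. intros _. exact Hd.
  - exists (mkposreal 1 Rlt_0_1). intros H; tauto. }
set (delta := fun q : Compactness.Tn 2 R =>
  match q with (x, (t, _)) => pos_div_2 (proj1_sig (Hex (x, t))) end).
destruct (compactness_value 2 (0, (0, tt)) (1, (T, tt)) delta) as [d Hd].
assert (UC : forall x t y s, 0 <= x <= 1 -> 0 <= t <= T -> 0 <= y <= 1 -> 0 <= s <= T ->
   Rabs (x - y) < d -> Rabs (t - s) < d -> Rabs (g x t - g y s) < 2).
{ intros x t y s Hx Ht Hy Hs Hxy Hts.
  specialize (Hd (x, (t, tt))). simpl in Hd.
  apply NNPP; intro Hn. apply Hd. { tauto. } intros [[x0 [t0 []]] [Hb [Hcl Hle]]].
  simpl in Hb. unfold delta in Hcl, Hle. simpl in Hcl, Hle. apply Hn.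
  destruct (Hex (x0, t0)) as [d0 Hd0]. simpl in Hle, Hcl, Hd0.
  assert (A1 := Hd0 (conj (proj1 Hb) (proj1 (proj2 Hb))) x t Hx Ht).
  assert (A2 := Hd0 (conj (proj1 Hb) (proj1 (proj2 Hb))) y s Hy Hs).
  destruct Hcl as [C1 [C2 _]].
  pose proof (cond_pos d0). assert (B1 : Rabs (g x t - g x0 t0) < 1) by (apply A1; lra).
  assert (B2 : Rabs (g y s - g x0 t0) < 1).
  { apply A2.
    - replace (y - x0) with ((y - x) + (x - x0)) by ring.
      eapply Rle_lt_trans; [apply Rabs_triang|]. rewrite <- Rabs_Ropp in Hxy.
      replace (- (x - y)) with (y - x) in Hxy by ring. lra.
    - replace (s - t0) with ((s - t) + (t - t0)) by ring.
      eapply Rle_lt_trans; [apply Rabs_triang|]. rewrite <- Rabs_Ropp in Hts.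
      replace (- (t - s)) with (s - t) in Hts by ring. lra. }
  replace (g x t - g y s) with ((g x t - g x0 t0) - (g y s - g x0 t0)) by ring.
  eapply Rle_lt_trans; [apply Rabs_triang|]. rewrite Rabs_Ropp. lra. }
destruct (archimed ((1 + T) / d)) as [Hn _].
assert (Hup : (0 <= up ((1 + T) / d))%Z).
{ apply le_IZR. assert (0 < (1+T)/d) by (apply Rdiv_lt_0_compat; [lra| apply cond_pos]). lra. }
set (n := Z.to_nat (up ((1 + T) / d))).
assert (Hn' : (1 + T) / d < INR n).
{ unfold n. rewrite INR_IZR_INZ, Z2Nat.id by exact Hup. exact Hn. }
assert (Hnpos : 0 < INR n).
{ assert (0 < (1+T)/d) by (apply Rdiv_lt_0_compat; [lra| apply cond_pos]). lra. }
assert (Hstep : 1 / INR n < d /\ T / INR n < d).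
{ assert (Hd0 := cond_pos d).
  assert (H1 : 1 + T < d * INR n).
  { replace (1+T) with (d * ((1+T)/d)) by (field; lra). apply Rmult_lt_compat_l; lra. }
  split; apply (Rmult_lt_reg_r (INR n)); auto; unfold Rdiv;
  rewrite Rmult_assoc, Rinv_l by lra; lra. }
exists (Rabs (g 0 0) + 2 * INR n).
intros x t Hx Ht.
assert (Hind : forall i, (i <= n)%nat ->
  Rabs (g (INR i / INR n * x) (INR i / INR n * t)) <= Rabs (g 0 0) + 2 * INR i).
{ induction i as [|i IH]; intros Hi.
  - simpl. unfold Rdiv. rewrite !Rmult_0_l. lra.
  - assert (Hi' : INR (S i) <= INR n) by (apply le_INR; exact Hi).
    assert (Hfr : 0 <= INR (S i) / INR n <= 1).
    { split. apply Rdiv_le_0_compat; [apply pos_INR| lra].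
      apply (Rmult_le_reg_r (INR n)); auto. unfold Rdiv. rewrite Rmult_assoc, Rinv_l; lra. }
    assert (Hfr0 : 0 <= INR i / INR n <= 1).
    { assert (INR i <= INR n) by (apply le_INR; lia). split. apply Rdiv_le_0_compat; [apply pos_INR| lra].
      apply (Rmult_le_reg_r (INR n)); auto. unfold Rdiv. rewrite Rmult_assoc, Rinv_l; lra. }
    assert (Hdiff : forall z, INR (S i) / INR n * z - INR i / INR n * z = z / INR n).
    { intro z. rewrite S_INR. field. lra. }
    assert (HU := UC (INR (S i) / INR n * x) (INR (S i) / INR n * t)
                     (INR i / INR n * x) (INR i / INR n * t)).
    assert (IH' := IH ltac:(lia)).
    assert (Hlt : Rabs (g (INR (S i) / INR n * x) (INR (S i) / INR n * t) -
                        g (INR i / INR n * x) (INR i / INR n * t)) < 2).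
    { apply HU.
      - split; nra.
      - split; nra.
      - split; nra.
      - split; nra.
      - rewrite Hdiff. rewrite Rabs_pos_eq by (apply Rdiv_le_0_compat; lra).
        apply Rle_lt_trans with (1 / INR n); [|tauto]. unfold Rdiv.
        apply Rmult_le_compat_r; [left; apply Rinv_0_lt_compat; lra| lra].
      - rewrite Hdiff. rewrite Rabs_pos_eq by (apply Rdiv_le_0_compat; lra).
        apply Rle_lt_trans with (T / INR n); [|tauto]. unfold Rdiv.
        apply Rmult_le_compat_r; [left; apply Rinv_0_lt_compat; lra| lra]. }
    replace (2 * INR (S i)) with (2 * INR i + 2) by (rewrite S_INR; ring).
    pose proof (Rabs_triang_inv (g (INR (S i) / INR n * x) (INR (S i) / INR n * t))
                                (g (INR i / INR n * x) (INR i / INR n * t))). lra. }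
specialize (Hind n (le_n n)).
replace (INR n / INR n * x) with x in Hind by (field; lra).
replace (INR n / INR n * t) with t in Hind by (field; lra). exact Hind.
Qed.

Lemma Mbar_bound T g : 0 <= T -> continuous_on_Omega T g ->
  forall x t, 0 <= x <= 1 -> 0 <= t <= T -> Rabs (g x t) <= Mbar T g.
Proof.
intros HT Hc x t Hx Ht.
destruct (bounded_Omega T g HT Hc) as [K HK].
unfold Mbar. destruct (Lub_Rbar_correct (fun z => exists x t, 0 <= x <= 1 /\ 0 <= t <= T /\ z = Rabs (g x t))) as [Hub Hlub].
set (L := Lub_Rbar _) in *.
assert (H1 : Rbar_le (Rabs (g x t)) L) by (apply Hub; exists x, t; auto).
assert (H2 : Rbar_le L K).
{ apply Hlub. intros z [y [s [Hy [Hs ->]]]]. simpl. apply HK; auto. }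
destruct L as [l| |]; simpl in *; tauto.
Qed.


Lemma pw_pos x y : 0 < x -> pw x y = Rpower x y.
Proof. intros H. unfold pw. destruct (Rlt_dec 0 x); [reflexivity|lra]. Qed.

Lemma pw_nonpos x y : x <= 0 -> pw x y = 0.
Proof. intros H. unfold pw. destruct (Rlt_dec 0 x); [lra|reflexivity]. Qed.

Lemma pw_nonneg x y : 0 <= pw x y.
Proof. unfold pw. destruct (Rlt_dec 0 x); [|lra]. unfold Rpower. left; apply exp_pos. Qed.

Lemma pw_mul x h p : 0 < h -> 0 <= x -> pw (x * h) p = pw x p * Rpower h p.
Proof.
intros Hh Hx. destruct (Req_dec x 0) as [->|Hx0].
- rewrite Rmult_0_l, pw_nonpos by lra. lra.
- rewrite !pw_pos by nra. rewrite Rpower_mult_distr; auto. lra.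
Qed.

Lemma pw_small p : 0 < p -> forall eps, 0 < eps -> exists d, 0 < d /\
  forall z, 0 <= z < d -> pw z p < eps.
Proof.
intros Hp eps He. exists (Rpower eps (/ p)). split. { unfold Rpower; apply exp_pos. }
intros z [Hz0 Hz]. destruct (Req_dec z 0) as [->|Hz1].
- rewrite pw_nonpos; lra.
- rewrite pw_pos by lra.
  replace eps with (Rpower (Rpower eps (/ p)) p).
  + apply Rlt_Rpower_l; lra.
  + rewrite Rpower_mult, Rinv_l, Rpower_1; lra.
Qed.

Definition clamp (y : R) : R :=
  if Rle_dec y 0 then 0 else if Rle_dec 1 y then 1 else y.

Lemma clamp_id y : 0 <= y <= 1 -> clamp y = y.
Proof. intros H. unfold clamp. destruct (Rle_dec y 0); [lra|]. destruct (Rle_dec 1 y); lra. Qed.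

Lemma clamp_in y : 0 <= clamp y <= 1.
Proof. unfold clamp. destruct (Rle_dec y 0); [lra|]. destruct (Rle_dec 1 y); lra. Qed.

Lemma clamp_lip x y : Rabs (clamp y - clamp x) <= Rabs (y - x).
Proof.
unfold clamp. destruct (Rle_dec y 0); destruct (Rle_dec x 0);
try destruct (Rle_dec 1 y); try destruct (Rle_dec 1 x);
unfold Rabs; repeat destruct Rcase_abs; lra.
Qed.

Lemma deriv_on_eps f f' x : is_deriv_on 0 1 f f' -> 0 <= x <= 1 ->
  forall eps : posreal, exists d : posreal, forall y, 0 <= y <= 1 -> y <> x ->
  Rabs (y - x) < d -> Rabs ((f y - f x) / (y - x) - f' x) < eps.
Proof.
intros H Hx eps. destruct (H x Hx (ball (f' x) eps) (locally_ball _ _)) as [d Hd].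
exists d. intros y Hy Hyx Hyd. apply (Hd y Hyd (conj Hy Hyx)).
Qed.

Lemma deriv_on_interior f f' x : is_deriv_on 0 1 f f' -> 0 < x < 1 ->
  is_derive f x (f' x).
Proof.
intros H Hx. apply is_derive_Reals. intros eps He.
destruct (deriv_on_eps f f' x H ltac:(lra) (mkposreal eps He)) as [d Hd].
assert (Hm : 0 < Rmin d (Rmin x (1 - x))).
{ apply Rmin_pos; [apply cond_pos| apply Rmin_pos; lra]. }
exists (mkposreal _ Hm). intros h Hh0 Hh. simpl in Hh.
assert (H1 := Rmin_l d (Rmin x (1 - x))).
assert (H2 := Rmin_l x (1 - x)). assert (H3 := Rmin_r x (1 - x)).
assert (H4 := Rmin_r d (Rmin x (1 - x))).
assert (Hb : Rabs h < x /\ Rabs h < 1 - x) by lra.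
assert (Hb2 : - Rabs h <= h <= Rabs h).
{ split; [| apply RRle_abs]. pose proof (Rabs_Ropp h). pose proof (RRle_abs (- h)). lra. }
specialize (Hd (x + h)).
replace (x + h - x) with h in Hd by ring. apply Hd; lra.
Qed.

Lemma deriv_on_cont f f' x0 : is_deriv_on 0 1 f f' -> 0 <= x0 <= 1 ->
  forall eps, 0 < eps -> exists d, 0 < d /\ forall z, 0 <= z <= 1 ->
  Rabs (z - x0) < d -> Rabs (f z - f x0) < eps.
Proof.
intros H Hx eps He.
destruct (deriv_on_eps f f' x0 H Hx (mkposreal 1 Rlt_0_1)) as [d Hd]. simpl in Hd.
set (A := Rabs (f' x0) + 1).
assert (HA : 0 < A) by (unfold A; pose proof (Rabs_pos (f' x0)); lra).
exists (Rmin d (eps / A)). split. { apply Rmin_pos; [apply cond_pos| apply Rdiv_lt_0_compat; lra]. }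
intros z Hz Hzd. assert (H1 := Rmin_l d (eps / A)). assert (H2 := Rmin_r d (eps / A)).
destruct (Req_dec z x0) as [->|Hne].
- rewrite Rminus_eq_0, Rabs_R0. lra.
- specialize (Hd z Hz Hne ltac:(lra)).
  set (q := (f z - f x0) / (z - x0)) in Hd.
  assert (Hzx : z - x0 <> 0) by lra.
  replace (f z - f x0) with (q * (z - x0)) by (unfold q; field; auto).
  rewrite Rabs_mult.
  assert (Hq : Rabs q <= A).
  { unfold A. replace q with ((q - f' x0) + f' x0) by ring.
    eapply Rle_trans; [apply Rabs_triang|]. lra. }
  apply Rle_lt_trans with (A * Rabs (z - x0)).
  + apply Rmult_le_compat_r; [apply Rabs_pos| exact Hq].
  + replace eps with (A * (eps / A)) by (field; lra).
    apply Rmult_lt_compat_l; lra.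
Qed.

Lemma cont_clamp f f' : is_deriv_on 0 1 f f' ->
  forall x, continuous (fun y => f (clamp y)) x.
Proof.
intros H x. apply filterlim_locally. intros eps.
destruct (deriv_on_cont f f' (clamp x) H (clamp_in x) eps (cond_pos eps)) as [d [Hd Hdd]].
exists (mkposreal d Hd). intros y Hy. simpl in Hy.
change (Rabs (f (clamp y) - f (clamp x)) < eps).
apply Hdd. apply clamp_in.
eapply Rle_lt_trans; [apply clamp_lip|]. exact Hy.
Qed.

Lemma mvt_strict f df a b : a < b ->
  (forall x, a < x < b -> is_derive f x (df x)) ->
  (forall x, a <= x <= b -> continuous f x) ->
  exists c, a < c < b /\ f b - f a = df c * (b - a).
Proof.
intros Hab Hd Hc.
set (pr1 := fun c (P : a < c < b) =>
  exist (fun l => derivable_pt_lim f c l) (df c) (proj1 (is_derive_Reals _ _ _) (Hd c P))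
  : derivable_pt f c).
set (pr2 := fun c (_ : a < c < b) => derivable_pt_id c).
destruct (MVT f id a b pr1 pr2 Hab) as [c [P Hc']].
- intros c Hc0. apply continuity_pt_filterlim. apply Hc. exact Hc0.
- intros c _. apply derivable_continuous_pt. apply derivable_pt_id.
- exists c. split; [exact P|]. unfold pr1, pr2 in Hc'. simpl in Hc'.
  rewrite derive_pt_id in Hc'. unfold id in Hc'. lra.
Qed.

Lemma interp f0 f1 f2 Mb a b s : 0 <= a -> a < b -> b <= 1 -> a <= s <= b ->
  (forall y, continuous f0 y) ->
  (forall y, 0 < y < 1 -> is_derive f0 y (f1 y)) ->
  (forall y, 0 < y < 1 -> is_derive f1 y (f2 y)) ->
  (forall y, 0 <= y <= 1 -> Rabs (f2 y) <= Mb) ->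
  Rabs (f0 s - (f0 a * (b - s) + f0 b * (s - a)) / (b - a)) <= Mb * (b - a) ^ 2 / 8.
Proof.
intros Ha Hab Hb Hs Hc H1 H2 H3.
assert (HMb : 0 <= Mb) by (pose proof (H3 a ltac:(lra)); pose proof (Rabs_pos (f2 a)); lra).
assert (Hrhs : 0 <= Mb * (b - a) ^ 2 / 8) by (apply Rmult_le_pos; [apply Rmult_le_pos; [lra|apply pow2_ge_0]| lra]).
destruct (Req_dec s a) as [->|Hsa].
{ replace (f0 a - (f0 a * (b - a) + f0 b * (a - a)) / (b - a)) with 0 by (field; lra).
  rewrite Rabs_R0; exact Hrhs. }
destruct (Req_dec s b) as [->|Hsb].
{ replace (f0 b - (f0 a * (b - b) + f0 b * (b - a)) / (b - a)) with 0 by (field; lra).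
  rewrite Rabs_R0; exact Hrhs. }
set (e := f0 s - (f0 a * (b - s) + f0 b * (s - a)) / (b - a)).
set (K := e / ((s - a) * (s - b))).
assert (Hden : (s - a) * (s - b) <> 0) by (apply Rmult_integral_contrapositive; lra).
set (phi := fun y => f0 y - (f0 a * (b - y) + f0 b * (y - a)) / (b - a) - K * ((y - a) * (y - b))).
set (dphi := fun y => f1 y - (f0 b - f0 a) / (b - a) - K * (2 * y - a - b)).
assert (Hdphi : forall y, 0 < y < 1 -> is_derive phi y (dphi y)).
{ intros y Hy. unfold phi, dphi.
  apply (is_derive_minus (fun y => f0 y - (f0 a * (b - y) + f0 b * (y - a)) / (b - a))
           (fun y => K * ((y - a) * (y - b)))).
  - apply (is_derive_minus f0 (fun y => (f0 a * (b - y) + f0 b * (y - a)) / (b - a))).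
    + apply H1; exact Hy.
    + auto_derive; [easy| field; lra].
  - auto_derive; [easy| ring]. }
assert (Hcphi : forall y, continuous phi y).
{ intro y. unfold phi. apply (continuous_minus (fun y => f0 y - (f0 a * (b - y) + f0 b * (y - a)) / (b - a))).
  apply (continuous_minus f0). apply Hc.
  apply ex_derive_continuous; auto_derive; easy.
  apply ex_derive_continuous; auto_derive; easy. }
assert (Pa : phi a = 0) by (unfold phi; field; lra).
assert (Pb : phi b = 0) by (unfold phi; field; lra).
assert (Ps : phi s = 0) by (unfold phi, K, e; field; lra).
destruct (mvt_strict phi dphi a s ltac:(lra)) as [x1 [Hx1 E1]].
{ intros y Hy; apply Hdphi; lra. } { intros y _; apply Hcphi. }
destruct (mvt_strict phi dphi s b ltac:(lra)) as [x2 [Hx2 E2]].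
{ intros y Hy; apply Hdphi; lra. } { intros y _; apply Hcphi. }
assert (D1 : dphi x1 = 0).
{ rewrite Pa, Ps in E1. apply (Rmult_eq_reg_r (s - a)); lra. }
assert (D2 : dphi x2 = 0).
{ rewrite Pb, Ps in E2. apply (Rmult_eq_reg_r (b - s)); lra. }
destruct (mvt_strict dphi (fun y => f2 y - 2 * K) x1 x2 ltac:(lra)) as [xi [Hxi E3]].
{ intros y Hy. unfold dphi. replace (f2 y - 2 * K) with (f2 y - 0 - 2 * K) by ring.
  apply (is_derive_minus (fun y => f1 y - (f0 b - f0 a) / (b - a)) (fun y => K * (2 * y - a - b))).
  apply (is_derive_minus f1 (fun y => (f0 b - f0 a) / (b - a))).
  apply H2; lra. auto_derive; [easy| ring]. auto_derive; [easy| ring]. }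
{ intros y Hy. unfold dphi.
  apply (continuous_minus (fun y => f1 y - (f0 b - f0 a) / (b - a))).
  apply (continuous_minus f1). apply ex_derive_continuous. exists (f2 y); apply H2; lra.
  apply continuous_const.
  apply ex_derive_continuous; auto_derive; easy. }
rewrite D1, D2 in E3.
assert (Hf2 : f2 xi = 2 * K).
{ assert (Hz : (f2 xi - 2 * K) * (x2 - x1) = 0) by lra.
  apply Rmult_integral in Hz. lra. }
assert (He : e = f2 xi / 2 * ((s - a) * (s - b))).
{ rewrite Hf2. unfold K. field. split; lra. }
change (Rabs e <= Mb * (b - a) ^ 2 / 8). rewrite He.
rewrite Rabs_mult.
assert (Hq : Rabs ((s - a) * (s - b)) <= (b - a) ^ 2 / 4).
{ assert (0 <= s - a) by lra. assert (s - b <= 0) by lra.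
  rewrite Rabs_left1.
  - pose proof (pow2_ge_0 (s - (a + b) / 2)). nra.
  - apply Rmult_le_0_l; lra. }
assert (Hf : Rabs (f2 xi / 2) <= Mb / 2).
{ unfold Rdiv. rewrite Rabs_mult, (Rabs_pos_eq (/ 2)) by lra. specialize (H3 xi ltac:(lra)). lra. }
apply Rle_trans with (Mb / 2 * ((b - a) ^ 2 / 4)).
- apply Rmult_le_compat; try apply Rabs_pos; assumption.
- lra.
Qed.

Lemma pw_derive x p : 0 < x -> is_derive (fun t => pw t p) x (p * Rpower x (p - 1)).
Proof.
intros Hx. apply (is_derive_ext_loc (fun t => Rpower t p)).
- exists (mkposreal x Hx). intros y Hy. change (Rabs (y - x) < x) in Hy.
  rewrite pw_pos; [reflexivity|]. apply Rabs_def2 in Hy. lra.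
- apply is_derive_Reals. apply derivable_pt_lim_power. exact Hx.
Qed.

Lemma pw_cont x p : 0 < x -> continuous (fun t => pw t p) x.
Proof. intros Hx. apply (ex_derive_continuous (K:=R_AbsRing) (V:=R_NormedModule)). eexists. apply pw_derive. exact Hx. Qed.

Lemma pwk_derive c s p : s < c ->
  is_derive (fun t => pw (c - t) p) s (- (p * Rpower (c - s) (p - 1))).
Proof.
intros Hs. replace (- (p * Rpower (c - s) (p - 1))) with (scal (-1) (p * Rpower (c - s) (p - 1))).
- apply (is_derive_comp (fun t => pw t p) (fun t => c - t)).
  + apply pw_derive. lra.
  + auto_derive; [easy| ring].
- change (-1 * (p * Rpower (c - s) (p - 1)) = - (p * Rpower (c - s) (p - 1))). ring.
Qed.

Lemma pwk_cont c s p : s < c -> continuous (fun t => pw (c - t) p) s.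
Proof. intros Hs. apply (ex_derive_continuous (K:=R_AbsRing) (V:=R_NormedModule)). eexists. apply pwk_derive. exact Hs. Qed.

Lemma abs_RInt_sym (f : R -> R) (P : R -> Prop) B :
  (forall u v, P u -> P v -> ex_RInt f u v) ->
  (forall u v, u <= v -> P u -> P v -> Rabs (RInt f u v) <= B) ->
  forall u v, P u -> P v -> Rabs (RInt f u v) <= B.
Proof.
intros Hex H u v Hu Hv. destruct (Rle_dec u v) as [Huv|Huv].
- apply H; auto.
- rewrite <- opp_RInt_swap by (apply Hex; auto). change (Rabs (- RInt f v u) <= B). rewrite Rabs_Ropp. apply H; auto. lra.
Qed.


Lemma exp_neg_le1 t : 0 <= t -> exp (- t) <= 1.
Proof. intros H. rewrite <- exp_0. destruct (Req_dec t 0) as [->|]. rewrite Ropp_0; lra. left; apply exp_increasing; lra. Qed.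

Lemma exp_neg_lt_inv t : 0 < t -> exp (- t) < / t.
Proof.
intros H. rewrite exp_Ropp. apply Rinv_lt_contravar. { apply Rmult_lt_0_compat; [lra|apply exp_pos]. }
pose proof (exp_ineq1_le t). lra.
Qed.

Lemma G_cont p t : 0 < t -> continuous (fun t => pw t p * exp (- t)) t.
Proof.
intros Ht. apply (continuous_mult (fun t => pw t p) (fun t => exp (- t))).
- apply pw_cont; exact Ht.
- apply (ex_derive_continuous (K:=R_AbsRing) (V:=R_NormedModule)). auto_derive; easy.
Qed.

Lemma G_ex p a b : 0 < a -> 0 < b -> ex_RInt (fun t => pw t p * exp (- t)) a b.
Proof.
intros Ha Hb. apply (ex_RInt_continuous (V:=R_CompleteNormedModule)). intros z Hz. apply G_cont.
assert (0 < Rmin a b) by (apply Rmin_pos; lra). lra.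
Qed.

Lemma kernel_int p u v : 0 < u -> u <= v -> -1 < p ->
  is_RInt (fun t => pw t p) u v ((pw v (p + 1) - pw u (p + 1)) / (p + 1)).
Proof.
intros Hu Huv Hp.
replace ((pw v (p + 1) - pw u (p + 1)) / (p + 1)) with
  (minus ((fun t => / (p + 1) * pw t (p + 1)) v) ((fun t => / (p + 1) * pw t (p + 1)) u))
  by (unfold minus, plus, opp; simpl; field; lra).
apply (is_RInt_derive (V:=R_CompleteNormedModule) (fun t => / (p + 1) * pw t (p + 1))).
- intros x Hx. rewrite Rmin_left, Rmax_right in Hx by lra.
  replace (pw x p) with (/ (p + 1) * ((p + 1) * Rpower x (p + 1 - 1))).
  + apply is_derive_scal. apply pw_derive. lra.
  + rewrite pw_pos by lra. replace (p + 1 - 1) with p by ring. field. lra.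
- intros x Hx. rewrite Rmin_left, Rmax_right in Hx by lra. apply pw_cont. lra.
Qed.

Lemma exp_int u v : is_RInt (fun t => exp (- t)) u v (exp (- u) - exp (- v)).
Proof.
replace (exp (- u) - exp (- v)) with (minus ((fun t => - exp (- t)) v) ((fun t => - exp (- t)) u))
  by (unfold minus, plus, opp; simpl; ring).
apply (is_RInt_derive (V:=R_CompleteNormedModule) (fun t => - exp (- t))).
- intros x _. auto_derive; [easy| ring].
- intros x _. apply (ex_derive_continuous (K:=R_AbsRing) (V:=R_NormedModule)). auto_derive; easy.
Qed.

Lemma pw_le1 t p : 1 <= t -> p <= 0 -> pw t p <= 1.
Proof. intros Ht Hp. rewrite pw_pos by lra. rewrite <- (Rpower_O t) by lra. apply Rle_Rpower; lra. Qed.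

Lemma pw_ge1 t p : 0 < t <= 1 -> p <= 0 -> 1 <= pw t p.
Proof.
intros Ht Hp. rewrite pw_pos by lra. replace p with (- - p) by ring. rewrite Rpower_Ropp.
assert (H : Rpower t (- p) <= 1).
{ assert (E1 : Rpower 1 (- p) = 1) by (unfold Rpower; rewrite ln_1, Rmult_0_r, exp_0; reflexivity).
  rewrite <- E1. apply Rle_Rpower_l; lra. }
assert (H0 : 0 < Rpower t (- p)) by (unfold Rpower; apply exp_pos).
rewrite <- Rinv_1. apply Rinv_le_contravar; lra.
Qed.

Lemma gamma1_ex p : -1 < p <= 0 -> exists g,
  is_RInt_gen (fun t => pw t p * exp (- t)) (at_right 0) (Rbar_locally p_infty) g /\ 0 < g.
Proof.
intros Hp.
set (G := fun t => pw t p * exp (- t)).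
set (F := filter_prod (at_right 0) (Rbar_locally p_infty)).
assert (FP : ProperFilter F) by (apply filter_prod_proper).
set (lf := fun ab : R * R => RInt G (fst ab) (snd ab)).
assert (Hc : exists y, filterlim lf F (locally y)).
{ apply (filterlim_locally_cauchy (F := F)). intro eps.
  destruct (pw_small (p + 1) ltac:(lra) (eps * (p + 1) / 4)) as [d [Hd Hdd]].
  { apply Rmult_lt_0_compat; [apply Rmult_lt_0_compat; [apply cond_pos|lra]|lra]. }
  set (d' := Rmin d 1). assert (Hd' : 0 < d') by (apply Rmin_pos; lra).
  assert (Hd1 : d' <= d) by apply Rmin_l. assert (Hd2 : d' <= 1) by apply Rmin_r.
  set (M := Rmax 1 (4 / eps)).
  assert (HM1 : 1 <= M) by apply Rmax_l. assert (HM2 : 4 / eps <= M) by apply Rmax_r.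
  assert (He := cond_pos eps).
  exists (fun ab => 0 < fst ab < d' /\ M < snd ab). split.
  - apply (Filter_prod _ _ _ (fun a => 0 < a < d') (fun b => M < b)).
    + exists (mkposreal d' Hd'). intros y Hy Hy0. change (Rabs (y - 0) < d') in Hy.
      rewrite Rminus_0_r in Hy. apply Rabs_def2 in Hy. lra.
    + exists M. auto.
    + intros a b Ha Hb. simpl. auto.
  - assert (Small : forall u v, 0 < u < d' -> 0 < v < d' -> Rabs (RInt G u v) <= eps / 4).
    { apply (abs_RInt_sym G (fun u => 0 < u < d')).
      { intros u v Hu Hv. apply G_ex; lra. }
      intros u v Huv Hu Hv.
      assert (H1 := norm_RInt_le G (fun t => pw t p) u v (RInt G u v) ((pw v (p + 1) - pw u (p + 1)) / (p + 1)) Huv).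
      assert (H2 : Rabs (RInt G u v) <= (pw v (p + 1) - pw u (p + 1)) / (p + 1)).
      { apply H1.
        - intros x Hx. change (Rabs (G x) <= pw x p). unfold G.
          rewrite Rabs_pos_eq by (apply Rmult_le_pos; [apply pw_nonneg| left; apply exp_pos]).
          pose proof (pw_nonneg x p). pose proof (exp_neg_le1 x ltac:(lra)).
          rewrite <- (Rmult_1_r (pw x p)) at 2. apply Rmult_le_compat_l; lra.
        - apply (RInt_correct (V:=R_CompleteNormedModule)). apply G_ex; lra.
        - apply kernel_int; lra. }
      assert (H3 := Hdd v ltac:(lra)). pose proof (pw_nonneg u (p + 1)).
      eapply Rle_trans; [exact H2|].
      apply (Rmult_le_reg_r (p + 1)); [lra|]. unfold Rdiv. rewrite Rmult_assoc, Rinv_l by lra.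
      replace (eps * / 4 * (p + 1)) with (eps * (p + 1) / 4) by (field). lra. }
    assert (Tail : forall u v, M < u -> M < v -> Rabs (RInt G u v) <= eps / 4).
    { apply (abs_RInt_sym G (fun u => M < u)).
      { intros u v Hu Hv. apply G_ex; lra. }
      intros u v Huv Hu Hv.
      assert (H1 := norm_RInt_le G (fun t => exp (- t)) u v (RInt G u v) (exp (- u) - exp (- v)) Huv).
      assert (H2 : Rabs (RInt G u v) <= exp (- u) - exp (- v)).
      { apply H1.
        - intros x Hx. change (Rabs (G x) <= exp (- x)). unfold G.
          rewrite Rabs_pos_eq by (apply Rmult_le_pos; [apply pw_nonneg| left; apply exp_pos]).
          pose proof (pw_le1 x p ltac:(lra) ltac:(lra)). pose proof (pw_nonneg x p).
          pose proof (exp_pos (- x)). nra.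
        - apply (RInt_correct (V:=R_CompleteNormedModule)). apply G_ex; lra.
        - apply exp_int. }
      pose proof (exp_pos (- v)). pose proof (exp_neg_lt_inv u ltac:(lra)).
      assert (/ u <= eps / 4).
      { apply Rle_trans with (/ M). apply Rinv_le_contravar; lra.
        replace (eps / 4) with (/ (4 / eps)) by (field; lra). apply Rinv_le_contravar.
        apply Rdiv_lt_0_compat; lra. lra. }
      lra. }
    intros [a1 b1] [a2 b2] [Ha1 Hb1] [Ha2 Hb2]. simpl in *.
    change (Rabs (lf (a2, b2) - lf (a1, b1)) < eps). unfold lf; simpl.
    assert (E : RInt G a2 b2 - RInt G a1 b1 = RInt G a2 a1 + RInt G b1 b2).
    { rewrite <- (RInt_Chasles G a2 b1 b2) by (apply G_ex; lra).
      rewrite <- (RInt_Chasles G a2 a1 b1) by (apply G_ex; lra). change (plus (plus (RInt G a2 a1) (RInt G a1 b1)) (RInt G b1 b2) - RInt G a1 b1 = RInt G a2 a1 + RInt G b1 b2).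
      unfold plus; simpl. ring. }
    rewrite E. eapply Rle_lt_trans; [apply Rabs_triang|].
    pose proof (Small a2 a1 Ha2 Ha1). pose proof (Tail b1 b2 Hb1 Hb2). lra. }
destruct Hc as [y Hy].
exists y. split.
- intros P HP. assert (H1 := Hy P HP). unfold filtermapi.
  apply (filter_imp (fun ab => P (lf ab) /\ (0 < fst ab /\ 0 < snd ab))).
  + intros [a b] [HPa [Ha Hb]]. exists (lf (a, b)). split; [| exact HPa].
    unfold lf; simpl. apply (RInt_correct (V:=R_CompleteNormedModule)). apply G_ex; auto.
  + apply filter_and; [exact H1|].
    apply (Filter_prod (at_right 0) (Rbar_locally p_infty) _ (fun a => 0 < a) (fun b => 0 < b)).
    * exists (mkposreal 1 Rlt_0_1). intros; auto.
    * exists 0. auto.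
    * intros a b Ha Hb. simpl. auto.
- assert (Hle : Rbar_le (exp (-1) / 2) y).
  { apply (@filterlim_le _ F (Proper_StrongProper F FP) (fun _ => exp (-1) / 2) lf).
    - apply (Filter_prod (at_right 0) (Rbar_locally p_infty) _ (fun a => 0 < a < 1/2) (fun b => 1 < b)).
      + exists (mkposreal (1/2) ltac:(lra)). intros z Hz Hz0. change (Rabs (z - 0) < 1/2) in Hz.
        rewrite Rminus_0_r in Hz. apply Rabs_def2 in Hz. lra.
      + exists 1. auto.
      + intros a b Ha Hb. unfold lf; simpl.
        rewrite <- (RInt_Chasles G a (1/2) b), <- (RInt_Chasles G (1/2) 1 b); try (apply G_ex; lra).
        change (exp (-1) / 2 <= RInt G a (1/2) + (RInt G (1/2) 1 + RInt G 1 b)).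
        assert (Hpos : forall x, 0 <= G x) by (intro x; apply Rmult_le_pos; [apply pw_nonneg| left; apply exp_pos]).
        assert (A1 : 0 <= RInt G a (1/2)) by (apply RInt_ge_0; [lra| apply G_ex; lra| auto]).
        assert (A3 : 0 <= RInt G 1 b) by (apply RInt_ge_0; [lra| apply G_ex; lra| auto]).
        assert (A2 : RInt (fun _ => exp (-1)) (1/2) 1 <= RInt G (1/2) 1).
        { apply RInt_le; [lra| apply ex_RInt_const| apply G_ex; lra|].
          intros x Hx. unfold G. pose proof (pw_ge1 x p ltac:(lra) ltac:(lra)).
          assert (exp (-1) <= exp (- x)) by (left; apply exp_increasing; lra).
          pose proof (exp_pos (-1)). nra. }
        rewrite RInt_const in A2. change ((1 - 1/2) * exp (-1) <= RInt G (1/2) 1) in A2. lra.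
    - apply filterlim_const.
    - exact Hy. }
  simpl in Hle. pose proof (exp_pos (-1)). lra.
Qed.

Lemma gamma_facts gamma : 0 < gamma < 1 ->
  0 < Gamma (1 - gamma) /\ Gamma (2 - gamma) = (1 - gamma) * Gamma (1 - gamma).
Proof.
intros Hg.
destruct (gamma1_ex (- gamma) ltac:(lra)) as [g [Hig Hpos]].
assert (E1 : Gamma (1 - gamma) = g).
{ unfold Gamma. replace (1 - gamma - 1) with (- gamma) by ring.
  apply is_RInt_gen_unique. exact Hig. }
rewrite E1. split; [exact Hpos|].
set (q := 1 - gamma).
set (H := fun t => - (pw t q * exp (- t))).
set (DH := fun t => pw t (- gamma) * exp (- t) * q - pw t q * exp (- t)).
assert (HD : forall x, 0 < x -> is_derive H x (- DH x)).
{ intros x Hx. unfold H, DH.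
  replace (- (pw x (- gamma) * exp (- x) * q - pw x q * exp (- x))) with
    (opp (plus (mult (q * Rpower x (q - 1)) (exp (- x))) (mult (pw x q) (- exp (- x))))).
  - apply (is_derive_opp (fun t => pw t q * exp (- t))).
    apply (is_derive_mult (fun t => pw t q) (fun t => exp (- t))).
    + apply pw_derive; exact Hx.
    + auto_derive; [easy| ring].
    + intros; apply Rmult_comm.
  - unfold opp, plus, mult; simpl. rewrite !pw_pos by lra.
    replace (q - 1) with (- gamma) by (unfold q; ring). ring. }
assert (HDc : forall x, 0 < x -> continuous DH x).
{ intros x Hx. unfold DH.
  apply (continuous_minus (fun t => pw t (- gamma) * exp (- t) * q)).
  - apply (continuous_mult (fun t => pw t (- gamma) * exp (- t)) (fun _ => q)).
    + apply G_cont; exact Hx.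
    + apply continuous_const.
  - apply G_cont; exact Hx. }
assert (HDer : forall x, 0 < x -> Derive H x = - DH x).
{ intros x Hx. apply is_derive_unique. apply HD; exact Hx. }
assert (HR := is_RInt_gen_Derive (Fa := at_right 0) (Fb := Rbar_locally p_infty) H 0 0).
assert (HR' : is_RInt_gen (Derive H) (at_right 0) (Rbar_locally p_infty) (0 - 0)).
{ apply HR.
  - apply (Filter_prod (at_right 0) (Rbar_locally p_infty) _ (fun a => 0 < a) (fun b => 0 < b)).
    + exists (mkposreal 1 Rlt_0_1). intros; auto.
    + exists 0. auto.
    + intros a b Ha Hb x Hx. simpl in Hx. exists (- DH x). apply HD.
      assert (0 < Rmin a b) by (apply Rmin_pos; lra). lra.
  - apply (Filter_prod (at_right 0) (Rbar_locally p_infty) _ (fun a => 0 < a) (fun b => 0 < b)).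
    + exists (mkposreal 1 Rlt_0_1). intros; auto.
    + exists 0. auto.
    + intros a b Ha Hb x Hx. simpl in Hx.
      assert (Hx0 : 0 < x) by (assert (0 < Rmin a b) by (apply Rmin_pos; lra); lra).
      apply (continuous_ext_loc (Derive H) (fun t => - DH t)).
      * exists (mkposreal x Hx0). intros y Hy. change (Rabs (y - x) < x) in Hy.
        apply Rabs_def2 in Hy. rewrite HDer by lra. reflexivity.
      * apply (continuous_opp DH). apply HDc; exact Hx0.
  - apply filterlim_locally. intros eps.
    destruct (pw_small q ltac:(unfold q; lra) eps (cond_pos eps)) as [d [Hd Hdd]].
    exists (mkposreal d Hd). intros t Ht Ht0. change (Rabs (t - 0) < d) in Ht.
    rewrite Rminus_0_r in Ht. apply Rabs_def2 in Ht.
    change (Rabs (H t - 0) < eps). unfold H. rewrite Rminus_0_r, Rabs_Ropp.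
    rewrite Rabs_pos_eq by (apply Rmult_le_pos; [apply pw_nonneg| left; apply exp_pos]).
    pose proof (Hdd t ltac:(lra)). pose proof (exp_neg_le1 t ltac:(lra)).
    pose proof (pw_nonneg t q). pose proof (exp_pos (- t)). nra.
  - apply filterlim_locally. intros eps. assert (He := cond_pos eps).
    exists (Rmax 1 (4 / eps)). intros t Ht.
    assert (Ht1 : 1 <= Rmax 1 (4 / eps)) by apply Rmax_l.
    assert (Ht2 : 4 / eps <= Rmax 1 (4 / eps)) by apply Rmax_r.
    change (Rabs (H t - 0) < eps). unfold H. rewrite Rminus_0_r, Rabs_Ropp.
    rewrite Rabs_pos_eq by (apply Rmult_le_pos; [apply pw_nonneg| left; apply exp_pos]).
    assert (Hpw : pw t q <= t).
    { rewrite pw_pos by lra. rewrite <- (Rpower_1 t) at 2 by lra. apply Rle_Rpower; unfold q; lra. }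
    assert (Hexp : t * t / 4 < exp t).
    { replace (exp t) with (exp (t / 2) * exp (t / 2)) by (rewrite <- exp_plus; f_equal; field).
      pose proof (exp_ineq1_le (t / 2)). nra. }
    assert (Hte : t * exp (- t) < 4 / t).
    { rewrite exp_Ropp. pose proof (exp_pos t).
      apply (Rmult_lt_reg_r (exp t * t)). nra.
      replace (t * / exp t * (exp t * t)) with (t * t) by (field; lra).
      replace (4 / t * (exp t * t)) with (4 * exp t) by (field; lra). lra. }
    assert (4 / t <= eps).
    { apply (Rmult_le_reg_r t); [lra|].
      replace (4 / t * t) with 4 by (field; lra).
      assert (eps * (4 / eps) = 4) by (field; lra).
      assert (eps * (4 / eps) <= eps * t) by (apply Rmult_le_compat_l; lra). lra. }
    pose proof (exp_pos (- t)). pose proof (pw_nonneg t q). nra. }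
assert (HS := is_RInt_gen_scal (Fa := at_right 0) (Fb := Rbar_locally p_infty) _ q g Hig).
assert (HP := is_RInt_gen_plus _ _ _ _ HR' HS).
unfold Gamma. replace (2 - gamma - 1) with q by (unfold q; ring).
apply is_RInt_gen_unique.
replace (q * g) with (plus (0 - 0) (scal q g)) by (unfold plus, scal; simpl; unfold mult; simpl; ring).
eapply (is_RInt_gen_ext (Fa := at_right 0) (Fb := Rbar_locally p_infty)); [| exact HP].
apply (Filter_prod (at_right 0) (Rbar_locally p_infty) _ (fun a => 0 < a) (fun b => 0 < b)).
{ exists (mkposreal 1 Rlt_0_1). intros; auto. } { exists 0. auto. }
intros a b Ha Hb x Hx. simpl in Hx.
assert (Hx0 : 0 < x) by (assert (0 < Rmin a b) by (apply Rmin_pos; lra); lra).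
rewrite HDer by exact Hx0. unfold plus, scal; simpl; unfold mult; simpl. unfold DH. ring.
Qed.


Section Main.
Variables (gamma : R) (f0 f1 f2 : R -> R) (Mb h c : R).
Hypothesis Hg : 0 < gamma < 1.
Hypothesis Hc0 : forall y, continuous f0 y.
Hypothesis H1 : forall y, 0 < y < 1 -> is_derive f0 y (f1 y).
Hypothesis H2 : forall y, 0 < y < 1 -> is_derive f1 y (f2 y).
Hypothesis H3 : forall y, 0 <= y <= 1 -> Rabs (f2 y) <= Mb.
Hypothesis Hc1 : c < 1.

Let k s := pw (c - s) (- gamma).
Let g s := k s * f0 s.
Definition ell a b s := (f0 a * (b - s) + f0 b * (s - a)) / (b - a).
Definition alpha a b := (f0 a * (b - c) + f0 b * (c - a)) / (b - a).
Definition beta a b := (f0 a - f0 b) / (b - a).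
Definition Phi a b s := - alpha a b * pw (c - s) (1 - gamma) / (1 - gamma)
                        - beta a b * pw (c - s) (2 - gamma) / (2 - gamma).

Lemma k_int a y : a <= y -> y < c ->
  is_RInt k a y ((pw (c - a) (1 - gamma) - pw (c - y) (1 - gamma)) / (1 - gamma)).
Proof.
intros Hay Hyc.
replace ((pw (c - a) (1 - gamma) - pw (c - y) (1 - gamma)) / (1 - gamma)) with
  (minus ((fun s => - / (1 - gamma) * pw (c - s) (1 - gamma)) y)
         ((fun s => - / (1 - gamma) * pw (c - s) (1 - gamma)) a))
  by (unfold minus, plus, opp; simpl; field; lra).
apply (is_RInt_derive (V:=R_CompleteNormedModule) (fun s => - / (1 - gamma) * pw (c - s) (1 - gamma))).
- intros x Hx. rewrite Rmin_left, Rmax_right in Hx by lra.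
  replace (k x) with (- / (1 - gamma) * (- ((1 - gamma) * Rpower (c - x) (1 - gamma - 1)))).
  + apply is_derive_scal. apply pwk_derive. lra.
  + unfold k. rewrite pw_pos by lra. replace (1 - gamma - 1) with (- gamma) by ring. field. lra.
- intros x Hx. rewrite Rmin_left, Rmax_right in Hx by lra. apply pwk_cont. lra.
Qed.

Lemma Phi_int a b y : a < b -> a <= y -> y < c ->
  is_RInt (fun s => k s * ell a b s) a y (Phi a b y - Phi a b a).
Proof.
intros Hab Hay Hyc.
replace (Phi a b y - Phi a b a) with (minus (Phi a b y) (Phi a b a))
  by (unfold minus, plus, opp; simpl; ring).
apply (is_RInt_derive (V:=R_CompleteNormedModule) (Phi a b)).
- intros x Hx. rewrite Rmin_left, Rmax_right in Hx by lra. unfold Phi.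
  replace (k x * ell a b x) with
    ((- alpha a b / (1 - gamma)) * (- ((1 - gamma) * Rpower (c - x) (1 - gamma - 1)))
     - (beta a b / (2 - gamma)) * (- ((2 - gamma) * Rpower (c - x) (2 - gamma - 1)))).
  + apply (is_derive_ext (K:=R_AbsRing) (V:=R_NormedModule) (fun s => (- alpha a b / (1 - gamma)) * pw (c - s) (1 - gamma)
                                - (beta a b / (2 - gamma)) * pw (c - s) (2 - gamma))).
    { intro t. change (@eq R (- alpha a b / (1 - gamma) * pw (c - t) (1 - gamma) - beta a b / (2 - gamma) * pw (c - t) (2 - gamma)) (- alpha a b * pw (c - t) (1 - gamma) / (1 - gamma) - beta a b * pw (c - t) (2 - gamma) / (2 - gamma))). unfold Rdiv. ring. }
    apply (is_derive_minus (fun s => (- alpha a b / (1 - gamma)) * pw (c - s) (1 - gamma))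
                           (fun s => (beta a b / (2 - gamma)) * pw (c - s) (2 - gamma)));
    apply is_derive_scal; apply pwk_derive; lra.
  + unfold k, ell, alpha, beta. rewrite pw_pos by lra.
    replace (1 - gamma - 1) with (- gamma) by ring.
    replace (2 - gamma - 1) with (1 + - gamma) by ring.
    rewrite Rpower_plus, Rpower_1 by lra. field. lra.
- intros x Hx. rewrite Rmin_left, Rmax_right in Hx by lra.
  apply (continuous_mult k (ell a b)).
  + apply pwk_cont. lra.
  + unfold ell. apply (ex_derive_continuous (K:=R_AbsRing) (V:=R_NormedModule)).
    auto_derive. lra.
Qed.

Lemma ell_cont a b x : a < b -> continuous (ell a b) x.
Proof.
intros Hab. unfold ell. apply (ex_derive_continuous (K:=R_AbsRing) (V:=R_NormedModule)).
auto_derive. lra.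
Qed.

Lemma piece a b y : 0 <= a -> a < b -> b <= 1 -> b <= c -> a <= y <= b -> y < c ->
  exists E, is_RInt g a y (Phi a b y - Phi a b a + E) /\
  Rabs E <= Mb * (b - a) ^ 2 / 8 * ((pw (c - a) (1 - gamma) - pw (c - y) (1 - gamma)) / (1 - gamma)).
Proof.
intros Ha Hab Hb Hbc Hy Hyc.
set (e := fun s => k s * (f0 s - ell a b s)).
assert (Hex : ex_RInt e a y).
{ apply (ex_RInt_continuous (V:=R_CompleteNormedModule)). intros z Hz.
  rewrite Rmin_left, Rmax_right in Hz by lra. unfold e.
  apply (continuous_mult k (fun s => f0 s - ell a b s)).
  - apply pwk_cont. lra.
  - apply (continuous_minus f0 (ell a b)). apply Hc0. apply ell_cont; lra. }
exists (RInt e a y). split.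
- assert (HP := is_RInt_plus _ _ a y _ _ (Phi_int a b y Hab ltac:(lra) Hyc)
                  (RInt_correct (V:=R_CompleteNormedModule) e a y Hex)).
  eapply is_RInt_ext; [| exact HP].
  intros x _. unfold e, g. change (k x * ell a b x + k x * (f0 x - ell a b x) = k x * f0 x). ring.
- set (eps := Mb * (b - a) ^ 2 / 8).
  assert (HI := is_RInt_scal _ a y eps _ (k_int a y ltac:(lra) Hyc)).
  apply (norm_RInt_le e (fun s => scal eps (k s)) a y _ _ ltac:(lra)); [| | exact HI].
  + intros x Hx. change (Rabs (k x * (f0 x - ell a b x)) <= eps * k x).
    rewrite Rabs_mult. unfold k at 1. rewrite (Rabs_pos_eq (pw _ _)) by apply pw_nonneg.
    rewrite Rmult_comm. apply Rmult_le_compat_r. apply pw_nonneg.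
    unfold ell, eps. apply (interp f0 f1 f2 Mb a b x); auto; lra.
  + apply (RInt_correct (V:=R_CompleteNormedModule)). exact Hex.
Qed.

Lemma g_ex u v : u < c -> v < c -> ex_RInt g u v.
Proof.
intros Hu Hv. apply (ex_RInt_continuous (V:=R_CompleteNormedModule)). intros z Hz.
assert (z < c) by (pose proof (Rmax_lub_lt u v c Hu Hv); lra).
apply (continuous_mult k f0). apply pwk_cont; lra. apply Hc0.
Qed.

Lemma P_lim : 0 < c -> exists V, filterlim (fun y => RInt g 0 y) (at_left c) (locally V).
Proof.
intros Hcpos.
destruct (bounded_continuity (K:=R_AbsRing) (V:=R_NormedModule) f0 0 1 (fun x _ => Hc0 x)) as [M0 HM0].
set (M1 := Rabs M0 + 1). assert (HM1 : 0 < M1) by (unfold M1; pose proof (Rabs_pos M0); lra).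
apply (filterlim_locally_cauchy (F := at_left c)). intro eps.
assert (He := cond_pos eps).
destruct (pw_small (1 - gamma) ltac:(lra) (eps * (1 - gamma) / (2 * M1))) as [d [Hd Hdd]].
{ apply Rdiv_lt_0_compat; [apply Rmult_lt_0_compat; lra| lra]. }
set (d' := Rmin d c). assert (Hd' : 0 < d') by (apply Rmin_pos; lra).
assert (Hd1 : d' <= d) by apply Rmin_l. assert (Hd2 : d' <= c) by apply Rmin_r.
exists (fun y => c - d' < y < c). split.
- exists (mkposreal d' Hd'). intros y Hy Hyc. change (Rabs (y - c) < d') in Hy.
  apply Rabs_def2 in Hy. lra.
- assert (B : forall u v, c - d' < u < c -> c - d' < v < c -> Rabs (RInt g u v) <= eps / 2).
  { apply (abs_RInt_sym g (fun y => c - d' < y < c)).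
    { intros u v Hu Hv. apply g_ex; lra. }
    intros u v Huv Hu Hv.
    assert (HI := is_RInt_scal _ u v M1 _ (k_int u v Huv ltac:(lra))).
    eapply Rle_trans.
    + apply (norm_RInt_le g (fun s => scal M1 (k s)) u v _ _ Huv); [| | exact HI].
      * intros x Hx. change (Rabs (k x * f0 x) <= M1 * k x).
        rewrite Rabs_mult. unfold k at 1. rewrite (Rabs_pos_eq (pw _ _)) by apply pw_nonneg.
        rewrite Rmult_comm. apply Rmult_le_compat_r. apply pw_nonneg.
        assert (Hn := HM0 x ltac:(lra)). change (Rabs (f0 x) < M0) in Hn.
        unfold M1. pose proof (RRle_abs M0). lra.
      * apply (RInt_correct (V:=R_CompleteNormedModule)). apply g_ex; lra.
    + change (M1 * ((pw (c - u) (1 - gamma) - pw (c - v) (1 - gamma)) / (1 - gamma)) <= eps / 2).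
      assert (H4 := Hdd (c - u) ltac:(lra)). pose proof (pw_nonneg (c - v) (1 - gamma)).
      apply Rle_trans with (M1 * (pw (c - u) (1 - gamma) / (1 - gamma))).
      * apply Rmult_le_compat_l; [lra|]. unfold Rdiv. apply Rmult_le_compat_r.
        left; apply Rinv_0_lt_compat; lra. lra.
      * apply Rle_trans with (M1 * ((eps * (1 - gamma) / (2 * M1)) / (1 - gamma))).
        { apply Rmult_le_compat_l; [lra|]. unfold Rdiv. apply Rmult_le_compat_r.
          left; apply Rinv_0_lt_compat; lra. left. exact H4. }
        right. field. split; lra. }
  intros u v Hu Hv. change (Rabs (RInt g 0 v - RInt g 0 u) < eps).
  rewrite <- (RInt_Chasles g 0 u v) by (apply g_ex; lra).
  change (Rabs (RInt g 0 u + RInt g u v - RInt g 0 u) < eps).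
  assert (E : forall a b : R, Rabs (a + b - a) = Rabs b) by (intros; f_equal; ring).
  rewrite E. pose proof (B u v Hu Hv). lra.
Qed.

Variable r : nat.
Hypothesis Hh : 0 < h.
Hypothesis Hr : (1 <= r)%nat.
Hypothesis Hcdef : c = INR r * h.

Let x (j : nat) := INR j * h.

Fixpoint psum (n : nat) : R :=
  match n with
  | O => 0
  | S n' => psum n' + (Phi (x n') (x (S n')) (x (S n')) - Phi (x n') (x (S n')) (x n'))
  end.

Lemma Mb_nonneg : 0 <= Mb.
Proof. pose proof (H3 0 ltac:(lra)). pose proof (Rabs_pos (f2 0)). lra. Qed.

Lemma x_lt i j : (i < j)%nat -> x i < x j.
Proof. intros H. unfold x. apply Rmult_lt_compat_r; [exact Hh|]. apply lt_INR; exact H. Qed.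

Lemma x_S i : x (S i) - x i = h.
Proof. unfold x. rewrite S_INR. ring. Qed.

Lemma cum n : (n <= r - 1)%nat -> exists E, is_RInt g 0 (x n) (psum n + E) /\
  Rabs E <= Mb * h ^ 2 / 8 * ((pw c (1 - gamma) - pw (c - x n) (1 - gamma)) / (1 - gamma)).
Proof.
induction n as [|n IH]; intros Hn.
- exists 0. unfold x. simpl. rewrite Rmult_0_l, Rminus_0_r, Rminus_eq_0.
  split.
  + replace (0 + 0) with (@zero R_NormedModule) by (simpl; unfold zero; simpl; ring).
    apply is_RInt_point.
  + rewrite Rabs_R0. unfold Rdiv. rewrite Rmult_0_l, Rmult_0_r. lra.
- destruct (IH ltac:(lia)) as [E [HE HEb]].
  assert (Hxr : x (S n) < c) by (rewrite Hcdef; apply (x_lt (S n) r); lia).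
  assert (Hx0 : 0 <= x n) by (unfold x; apply Rmult_le_pos; [apply pos_INR| lra]).
  assert (Hxx := x_lt n (S n) ltac:(lia)).
  destruct (piece (x n) (x (S n)) (x (S n)) Hx0 Hxx ltac:(lra) ltac:(lra) ltac:(lra) Hxr)
    as [E2 [HE2 HE2b]].
  exists (E + E2). split.
  + assert (HC := is_RInt_Chasles _ _ _ _ _ _ HE HE2).
    replace (psum (S n) + (E + E2)) with (plus (psum n + E) (Phi (x n) (x (S n)) (x (S n)) - Phi (x n) (x (S n)) (x n) + E2))
      by (simpl; unfold plus; simpl; ring).
    exact HC.
  + rewrite x_S in HE2b.
    eapply Rle_trans; [apply Rabs_triang|].
    replace (Mb * h ^ 2 / 8 * ((pw c (1 - gamma) - pw (c - x (S n)) (1 - gamma)) / (1 - gamma)))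
      with (Mb * h ^ 2 / 8 * ((pw c (1 - gamma) - pw (c - x n) (1 - gamma)) / (1 - gamma))
          + Mb * h ^ 2 / 8 * ((pw (c - x n) (1 - gamma) - pw (c - x (S n)) (1 - gamma)) / (1 - gamma)))
      by (field; lra).
    lra.
Qed.

Lemma total y : x (r - 1) <= y < c -> exists E,
  is_RInt g 0 y (psum (r - 1) + (Phi (x (r - 1)) c y - Phi (x (r - 1)) c (x (r - 1))) + E) /\
  Rabs E <= Mb * h ^ 2 / 8 * (pw c (1 - gamma) / (1 - gamma)).
Proof.
intros Hy.
destruct (cum (r - 1) (le_n _)) as [E [HE HEb]].
assert (Hxc : x (S (r - 1)) = c) by (rewrite Hcdef; unfold x; f_equal; f_equal; lia).
assert (Hx0 : 0 <= x (r - 1)) by (unfold x; apply Rmult_le_pos; [apply pos_INR| lra]).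
assert (Hxx := x_lt (r - 1) (S (r - 1)) ltac:(lia)). rewrite Hxc in Hxx.
destruct (piece (x (r - 1)) c y Hx0 Hxx ltac:(lra) ltac:(lra) ltac:(lra) ltac:(lra)) as [E2 [HE2 HE2b]].
exists (E + E2). split.
- assert (HC := is_RInt_Chasles _ _ _ _ _ _ HE HE2).
  replace (psum (r - 1) + (Phi (x (r - 1)) c y - Phi (x (r - 1)) c (x (r - 1))) + (E + E2))
    with (plus (psum (r - 1) + E) (Phi (x (r - 1)) c y - Phi (x (r - 1)) c (x (r - 1)) + E2))
    by (unfold plus; simpl; ring).
  exact HC.
- assert (Hch : c - x (r - 1) = h) by (rewrite <- Hxc; apply x_S). rewrite Hch in HE2b, HEb.
  eapply Rle_trans; [apply Rabs_triang|].
  pose proof (pw_nonneg (c - y) (1 - gamma)). pose proof Mb_nonneg.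
  assert (0 <= Mb * h ^ 2 / 8) by (apply Rmult_le_pos; [apply Rmult_le_pos; [lra| apply pow2_ge_0]| lra]).
  assert (Hsum : Mb * h ^ 2 / 8 * ((pw c (1 - gamma) - pw (c - x (r - 1)) (1 - gamma)) / (1 - gamma))
     + Mb * h ^ 2 / 8 * ((pw (c - x (r - 1)) (1 - gamma) - pw (c - y) (1 - gamma)) / (1 - gamma))
     <= Mb * h ^ 2 / 8 * (pw c (1 - gamma) / (1 - gamma))).
  { rewrite <- Rmult_plus_distr_l. apply Rmult_le_compat_l; [lra|].
    unfold Rdiv. rewrite <- Rmult_plus_distr_r. apply Rmult_le_compat_r.
    left; apply Rinv_0_lt_compat; lra. lra. }
  lra.
Qed.

Lemma piece_val j : (j < r)%nat ->
  Phi (x j) (x (S j)) (x (S j)) - Phi (x j) (x (S j)) (x j) =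
  Rpower h (1 - gamma) * (- f0 (x j) * wtil gamma r 1 j + f0 (x (S j)) * wtil gamma r 0 j).
Proof.
intros Hj.
assert (Hm : INR (r - j) = INR r - INR j) by (apply minus_INR; lia).
assert (Hm1 : 1 <= INR (r - j)) by (replace 1 with (INR 1) by reflexivity; apply le_INR; lia).
assert (E1 : c - x j = INR (r - j) * h) by (rewrite Hcdef, Hm; unfold x; ring).
assert (E2 : c - x (S j) = (INR (r - j) - 1) * h) by (rewrite Hcdef, Hm; unfold x; rewrite S_INR; ring).
assert (E3 : x (S j) - x j = h) by apply x_S.
assert (E4 : forall p, Rpower h (1 + p) = h * Rpower h p) by (intro p; rewrite Rpower_plus, Rpower_1 by lra; reflexivity).
unfold Phi, alpha, beta. rewrite E1, E2, E3.
rewrite !pw_mul by lra.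
replace (2 - gamma) with (1 + (1 - gamma)) by ring. rewrite E4.
unfold wtil, cc.
rewrite (pw_pos (INR (r - j))) by lra.
replace (x (S j) - c) with (- ((INR (r - j) - 1) * h)) by (rewrite <- E2; ring).
replace (c - x j) with (INR (r - j) * h) by (rewrite <- E1; ring).
replace (1 + (1 - gamma)) with (2 - gamma) by ring.
field. repeat split; lra.
Qed.

Fixpoint rsum (G : nat -> R) (n : nat) : R :=
  match n with O => 0 | S n' => rsum G n' + G n' end.

Lemma psum_rsum n : (n <= r)%nat -> psum n = Rpower h (1 - gamma) *
  rsum (fun j => - f0 (x j) * wtil gamma r 1 j + f0 (x (S j)) * wtil gamma r 0 j) n.
Proof.
induction n as [|n IH]; intros Hn.
- simpl. ring.
- simpl. rewrite IH by lia. rewrite piece_val by lia. ring.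
Qed.

Lemma wsum (f : nat -> R) :
  sum_f_R0 (fun j => wgt gamma j r * f j) r =
  rsum (fun j => - f j * wtil gamma r 1 j + f (S j) * wtil gamma r 0 j) r.
Proof.
set (G := fun j => - f j * wtil gamma r 1 j + f (S j) * wtil gamma r 0 j).
assert (P : forall n, (n < r)%nat ->
  sum_f_R0 (fun j => wgt gamma j r * f j) n = rsum G n - wtil gamma r 1 n * f n).
{ induction n as [|n IH]; intros Hn.
  - simpl (sum_f_R0 _ 0). simpl (rsum G 0). unfold wgt.
    replace (Nat.eqb 0 0) with true by reflexivity.
    replace (Nat.eqb 0 r) with false by (symmetry; apply Nat.eqb_neq; lia). ring.
  - simpl (sum_f_R0 _ (S n)). rewrite IH by lia. simpl (rsum G (S n)).
    unfold wgt. replace (Nat.eqb (S n) 0) with false by reflexivity.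
    replace (Nat.eqb (S n) r) with false by (symmetry; apply Nat.eqb_neq; lia).
    replace (S n - 1)%nat with n by lia. unfold G. ring. }
assert (Fin : forall n, S n = r -> sum_f_R0 (fun j => wgt gamma j r * f j) (S n) = rsum G (S n)).
{ intros n Hn. simpl (sum_f_R0 _ (S n)). rewrite P by lia. simpl (rsum G (S n)).
  unfold wgt. replace (Nat.eqb (S n) 0) with false by reflexivity.
  replace (Nat.eqb (S n) r) with true by (symmetry; apply Nat.eqb_eq; lia).
  replace (S n - 1)%nat with n by lia. unfold G. ring. }
assert (Hr' : S (r - 1) = r) by lia.
pose proof (Fin (r - 1)%nat Hr') as HF. rewrite Hr' in HF. exact HF.
Qed.

Lemma Phi_at_c a b : Phi a b c = 0.
Proof. unfold Phi. rewrite Rminus_eq_0, !pw_nonpos by lra. field. lra. Qed.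

Lemma Phi_small a b : forall eps, 0 < eps -> exists d, 0 < d /\
  forall y, c - d < y < c -> Rabs (Phi a b y) < eps.
Proof.
intros eps He.
set (A := Rabs (alpha a b / (1 - gamma)) + 1).
set (B := Rabs (beta a b / (2 - gamma)) + 1).
assert (HA : 0 < A) by (unfold A; pose proof (Rabs_pos (alpha a b / (1 - gamma))); lra).
assert (HB : 0 < B) by (unfold B; pose proof (Rabs_pos (beta a b / (2 - gamma))); lra).
destruct (pw_small (1 - gamma) ltac:(lra) (eps / (2 * A))) as [d1 [Hd1 Hdd1]].
{ apply Rdiv_lt_0_compat; lra. }
destruct (pw_small (2 - gamma) ltac:(lra) (eps / (2 * B))) as [d2 [Hd2 Hdd2]].
{ apply Rdiv_lt_0_compat; lra. }
exists (Rmin d1 d2). split. { apply Rmin_pos; lra. }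
intros y Hy. assert (Hm1 := Rmin_l d1 d2). assert (Hm2 := Rmin_r d1 d2).
assert (P1 := Hdd1 (c - y) ltac:(lra)). assert (P2 := Hdd2 (c - y) ltac:(lra)).
pose proof (pw_nonneg (c - y) (1 - gamma)) as N1. pose proof (pw_nonneg (c - y) (2 - gamma)) as N2.
unfold Phi.
replace (- alpha a b * pw (c - y) (1 - gamma) / (1 - gamma) - beta a b * pw (c - y) (2 - gamma) / (2 - gamma))
  with (- ((alpha a b / (1 - gamma)) * pw (c - y) (1 - gamma)) + - ((beta a b / (2 - gamma)) * pw (c - y) (2 - gamma)))
  by (field; lra).
eapply Rle_lt_trans; [apply Rabs_triang|]. rewrite !Rabs_Ropp, !Rabs_mult.
rewrite (Rabs_pos_eq (pw _ (1 - gamma))) by exact N1. rewrite (Rabs_pos_eq (pw _ (2 - gamma))) by exact N2.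
assert (Q1 : Rabs (alpha a b / (1 - gamma)) * pw (c - y) (1 - gamma) <= A * pw (c - y) (1 - gamma)).
{ apply Rmult_le_compat_r; [exact N1| unfold A; lra]. }
assert (Q2 : Rabs (beta a b / (2 - gamma)) * pw (c - y) (2 - gamma) <= B * pw (c - y) (2 - gamma)).
{ apply Rmult_le_compat_r; [exact N2| unfold B; lra]. }
assert (Q3 : A * pw (c - y) (1 - gamma) < eps / 2).
{ replace (eps / 2) with (A * (eps / (2 * A))) by (field; lra). apply Rmult_lt_compat_l; lra. }
assert (Q4 : B * pw (c - y) (2 - gamma) < eps / 2).
{ replace (eps / 2) with (B * (eps / (2 * B))) by (field; lra). apply Rmult_lt_compat_l; lra. }
lra.
Qed.

Lemma main_int : exists V, is_RInt_gen g (at_point 0) (at_left c) V /\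
  Rabs (V - Rpower h (1 - gamma) * sum_f_R0 (fun j => wgt gamma j r * f0 (x j)) r)
    <= Mb * h ^ 2 / 8 * (pw c (1 - gamma) / (1 - gamma)).
Proof.
assert (Hcpos : 0 < c).
{ rewrite Hcdef. apply Rmult_lt_0_compat; [| exact Hh]. apply lt_0_INR; lia. }
destruct (P_lim Hcpos) as [V HV].
exists V. split.
- intros P HP. unfold filtermapi.
  apply (Filter_prod (at_point 0) (at_left c) _ (fun a => a = 0) (fun b => 0 < b < c /\ P (RInt g 0 b))).
  + reflexivity.
  + apply filter_and.
    * exists (mkposreal c Hcpos). intros y Hy Hyc. change (Rabs (y - c) < c) in Hy.
      apply Rabs_def2 in Hy. lra.
    * exact (HV P HP).
  + intros a b -> [Hb HPb]. exists (RInt g 0 b). split; [| exact HPb].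
    simpl. apply (RInt_correct (V:=R_CompleteNormedModule)). apply g_ex; lra.
- set (SS := Rpower h (1 - gamma) * sum_f_R0 (fun j => wgt gamma j r * f0 (x j)) r).
  set (K := Mb * h ^ 2 / 8 * (pw c (1 - gamma) / (1 - gamma))).
  set (m := (r - 1)%nat).
  assert (Hxc : x (S m) = c) by (rewrite Hcdef; unfold x, m; f_equal; f_equal; lia).
  assert (HS : SS = psum m + (Phi (x m) c c - Phi (x m) c (x m))).
  { unfold SS. rewrite wsum, <- psum_rsum by lia.
    replace r with (S m) at 1 by (unfold m; lia). simpl. rewrite Hxc. reflexivity. }
  rewrite Phi_at_c in HS.
  assert (Hxm : x m = c - h) by (rewrite <- Hxc; pose proof (x_S m); lra).
  destruct (Rle_or_lt (Rabs (V - SS)) K) as [Hok|Hbad]; [exact Hok|].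
  exfalso. set (d := Rabs (V - SS) - K). assert (Hd : 0 < d) by (unfold d; lra).
  destruct (HV (ball V (d / 2)) (locally_ball V (mkposreal (d / 2) ltac:(lra)))) as [d1 Hd1].
  destruct (Phi_small (x m) c (d / 2) ltac:(lra)) as [d2 [Hd2 Hdd2]].
  set (e := Rmin (Rmin d1 d2) h).
  assert (He : 0 < e) by (apply Rmin_pos; [apply Rmin_pos; [apply cond_pos| lra]| lra]).
  assert (He1 : e <= d1) by (pose proof (Rmin_l (Rmin d1 d2) h); pose proof (Rmin_l d1 d2); unfold e; lra).
  assert (He2 : e <= d2) by (pose proof (Rmin_l (Rmin d1 d2) h); pose proof (Rmin_r d1 d2); unfold e; lra).
  assert (He3 : e <= h) by (unfold e; apply Rmin_r).
  set (y := c - e / 2).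
  assert (Hy1 : Rabs (RInt g 0 y - V) < d / 2).
  { apply (Hd1 y). change (Rabs (y - c) < d1). unfold y.
    replace (c - e / 2 - c) with (- (e / 2)) by ring. rewrite Rabs_Ropp, Rabs_pos_eq; lra.
    unfold y; lra. }
  assert (Hy2 := Hdd2 y ltac:(unfold y; lra)).
  destruct (total y ltac:(unfold y; fold m; lra)) as [E [HE HEb]].
  fold m in HE. apply (is_RInt_unique (V:=R_CompleteNormedModule)) in HE.
  assert (Hsplit' : V - SS = (V - RInt g 0 y) + E + Phi (x m) c y).
  { rewrite HS. change (RInt g 0 y = psum m + (Phi (x m) c y - Phi (x m) c (x m)) + E) in HE. lra. }
  assert (Hb : Rabs (V - SS) <= Rabs (V - RInt g 0 y) + Rabs E + Rabs (Phi (x m) c y)).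
  { rewrite Hsplit'. eapply Rle_trans; [apply Rabs_triang|].
    pose proof (Rabs_triang (V - RInt g 0 y) E). lra. }
  rewrite <- Rabs_Ropp in Hy1. replace (- (RInt g 0 y - V)) with (V - RInt g 0 y) in Hy1 by ring.
  unfold d, K in *. lra.
Qed.

End Main.


Theorem theorem5p2 (T : R) (M N : nat) (u u1 u2 u3 : R -> R -> R) (gamma : R) (k : nat) :
  0 < T -> (1 <= M)%nat -> (1 <= N)%nat ->
  (forall t, 0 <= t <= T -> is_deriv_on 0 1 (fun x => u x t) (fun x => u1 x t)) ->
  (forall t, 0 <= t <= T -> is_deriv_on 0 1 (fun x => u1 x t) (fun x => u2 x t)) ->
  (forall t, 0 <= t <= T -> is_deriv_on 0 1 (fun x => u2 x t) (fun x => u3 x t)) ->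
  continuous_on_Omega T u3 ->
  0 < gamma < 1 -> (k <= M - 1)%nat ->
  let tau := T / INR M in
  let h := / INR N in
  let tk1 := INR (S k) * tau in
  let nu := pw h (1 - gamma) / Gamma (1 - gamma) in
  let R_h := fun r : nat =>
    caputo gamma (fun x => u1 x tk1) (INR r * h)
    - nu * sum_f_R0 (fun j => wgt gamma j r * u1 (INR j * h) tk1) r in
  forall r : nat, (1 <= r <= N - 1)%nat ->
    Rabs (R_h r) <= h ^ 2 * Mbar T u3 / (8 * Gamma (2 - gamma)).
Proof.
intros HT HM HN Hu Hu1 Hu2 Hcont Hg Hk tau h tk1 nu R_h r Hr.
assert (HMpos : 0 < INR M) by (apply lt_0_INR; lia).
assert (HNpos : 0 < INR N) by (apply lt_0_INR; lia).
assert (Htk : 0 <= tk1 <= T).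
{ unfold tk1, tau. assert (INR (S k) <= INR M) by (apply le_INR; lia).
  pose proof (pos_INR (S k)). split.
  - apply Rmult_le_pos; [lra| apply Rdiv_le_0_compat; lra].
  - replace T with (INR M * (T / INR M)) at 2 by (field; lra).
    apply Rmult_le_compat_r; [apply Rdiv_le_0_compat; lra| lra]. }
set (f0 := fun s => u1 (clamp s) tk1).
set (f1 := fun s => u2 s tk1).
set (f2 := fun s => u3 s tk1).
set (Mb := Mbar T u3).
assert (Hc0 : forall y, continuous f0 y) by (apply (cont_clamp _ _ (Hu1 tk1 Htk))).
assert (H1 : forall y, 0 < y < 1 -> is_derive f0 y (f1 y)).
{ intros y Hy. apply (is_derive_ext_loc (fun s => u1 s tk1)).
  - exists (mkposreal (Rmin y (1 - y)) ltac:(apply Rmin_pos; lra)).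
    intros z Hz. change (Rabs (z - y) < Rmin y (1 - y)) in Hz.
    pose proof (Rmin_l y (1 - y)). pose proof (Rmin_r y (1 - y)).
    apply Rabs_def2 in Hz. unfold f0. rewrite clamp_id by lra. reflexivity.
  - apply (deriv_on_interior _ _ y (Hu1 tk1 Htk) Hy). }
assert (H2 : forall y, 0 < y < 1 -> is_derive f1 y (f2 y)).
{ intros y Hy. apply (deriv_on_interior _ _ y (Hu2 tk1 Htk) Hy). }
assert (H3 : forall y, 0 <= y <= 1 -> Rabs (f2 y) <= Mb).
{ intros y Hy. apply Mbar_bound; auto; lra. }
assert (Hh : 0 < h) by (unfold h; apply Rinv_0_lt_compat; lra).
set (c := INR r * h).
assert (Hr1 : INR r < INR N) by (apply lt_INR; lia).
assert (Hc1 : c < 1).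
{ unfold c, h. replace 1 with (INR N * / INR N) by (field; lra).
  apply Rmult_lt_compat_r; [apply Rinv_0_lt_compat; lra| lra]. }
assert (Hcpos : 0 < c) by (unfold c; apply Rmult_lt_0_compat; [apply lt_0_INR; lia| lra]).
destruct (main_int gamma f0 f1 f2 Mb h c Hg Hc0 H1 H2 H3 Hc1 r Hh ltac:(lia) eq_refl)
  as [V [HV HVb]].
destruct (gamma_facts gamma Hg) as [HG1 HG2].
set (G1 := Gamma (1 - gamma)) in *.
assert (HI : RInt_gen (fun s => pw (INR r * h - s) (- gamma) * u1 s tk1) (at_point 0) (at_left (INR r * h)) = V).
{ apply is_RInt_gen_unique.
  eapply (is_RInt_gen_ext (Fa := at_point 0) (Fb := at_left c)); [| exact HV].
  apply (Filter_prod (at_point 0) (at_left c) _ (fun a => a = 0) (fun b => 0 < b < c)).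
  - reflexivity.
  - exists (mkposreal c Hcpos). intros y Hy Hyc. change (Rabs (y - c) < c) in Hy.
    apply Rabs_def2 in Hy. lra.
  - intros a b -> Hb x Hx. simpl in Hx. rewrite Rmin_left, Rmax_right in Hx by lra.
    unfold f0. rewrite clamp_id by lra. reflexivity. }
assert (Hsum : sum_f_R0 (fun j => wgt gamma j r * u1 (INR j * h) tk1) r =
               sum_f_R0 (fun j => wgt gamma j r * f0 (INR j * h)) r).
{ apply sum_eq. intros j Hj. unfold f0. rewrite clamp_id; [reflexivity|].
  assert (INR j <= INR r) by (apply le_INR; lia). pose proof (pos_INR j).
  split. apply Rmult_le_pos; lra. unfold c in Hc1. nra. }
unfold R_h, caputo, nu. rewrite HI, Hsum. rewrite pw_pos by lra. fold G1.
set (SS := sum_f_R0 (fun j => wgt gamma j r * f0 (INR j * h)) r) in *.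
replace (/ G1 * V - Rpower h (1 - gamma) / G1 * SS) with (/ G1 * (V - Rpower h (1 - gamma) * SS))
  by (field; lra).
rewrite Rabs_mult, Rabs_pos_eq by (left; apply Rinv_0_lt_compat; lra).
rewrite HG2.
assert (HMb : 0 <= Mb) by (pose proof (H3 0 ltac:(lra)); pose proof (Rabs_pos (f2 0)); lra).
assert (Hpc : pw c (1 - gamma) <= 1).
{ rewrite pw_pos by lra.
  replace 1 with (Rpower 1 (1 - gamma)) at 2 by (unfold Rpower; rewrite ln_1, Rmult_0_r, exp_0; reflexivity).
  apply Rle_Rpower_l; lra. }
assert (Hb2 : Mb * h ^ 2 / 8 * (pw c (1 - gamma) / (1 - gamma)) <= Mb * h ^ 2 / 8 * (1 / (1 - gamma))).
{ apply Rmult_le_compat_l. apply Rmult_le_pos; [apply Rmult_le_pos; [lra| apply pow2_ge_0]| lra].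
  unfold Rdiv. apply Rmult_le_compat_r; [left; apply Rinv_0_lt_compat; lra| lra]. }
apply Rle_trans with (/ G1 * (Mb * h ^ 2 / 8 * (1 / (1 - gamma)))).
- apply Rmult_le_compat_l; [left; apply Rinv_0_lt_compat; lra| lra].
- fold Mb. right. field. lra.
Qed.
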